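(* Let $\tau\in\mathbb{R}\setminus\mathbb{Q}$ and let $\bar\varphi\in\mathbb{T}$, and put $\bar\varphi'=R_{1/2}\bar\varphi$. Then there exist a Cantor set $C\subset\mathbb{T}$ with $R_{1/2}C=C$ and a Cantor function $\mathcal{P}:\mathbb{T}\to\mathbb{T}$ associated to $C$ such that: (a) $\mathcal{P}(A)=\{\overline{\varphi+n\tau}: n\in\mathbb{Z}\}\cup\{\overline{\varphi'+n\tau}: n\in\mathbb{Z}\}$, where $A$ is the set of accessible points of $C$; (b) $\mathcal{P}$ is $\mathbb{Z}_2$-equivariant, i.e. $\mathcal{P}\circ R_{1/2}=R_{1/2}\circ\mathcal{P}$.
   Context: $\mathbb{T}=\mathbb{R}/\mathbb{Z}$ with points $\bar\theta=\theta+\mathbb{Z}$; the rotation $R_{\bar\eta}:\mathbb{T}\to\mathbb{T}$ is $R_{\bar\eta}(\bar\theta)=\overline{\theta+\eta}$ (written $R_\eta$ for $\eta\in\mathbb{R}$). A Cantor set is a compact, totally disconnected, perfect subset $C\subset\mathbb{T}$; it can be written $C=\mathbb{T}\setminus\bigcup_{k\ge0}\dot\alpha_k$ where $\{\alpha_k\}$ are pairwise disjoint closed arcs (the closures of the gaps) and $\dot\alpha_k$ their interiors. The accessible set $A$ of $C$ is the set of endpoints of all the arcs $\alpha_k$. Define $\bar\theta_1\sim\bar\theta_2$ if $\bar\theta_1=\bar\theta_2$ or both lie in the same $\alpha_k$. A Cantor function associated to $C$ is a continuous, cyclic-order-preserving (degree one, monotone) map $\mathcal{P}:\mathbb{T}\to\mathbb{T}$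 with $\mathcal{P}(\bar\theta_1)=\mathcal{P}(\bar\theta_2)$ if and only if $\bar\theta_1\sim\bar\theta_2$. A map $g:\mathbb{T}\to\mathbb{T}$ is $\mathbb{Z}_m$-equivariant if $g(\bar\theta+\tfrac1m)=g(\bar\theta)+\tfrac1m$ for all $\bar\theta\in\mathbb{T}$. *)

(* Defs.v *)
(* the circle T = R/Z is modelled by real representatives. *)
From Stdlib Require Import Reals ZArith.
Open Scope R_scope.

Definition eqT (x y : R) : Prop := exists k : Z, x - y = IZR k.

Definition distT (x y : R) : R :=
  Rabs (x - y - IZR (Int_part (x - y + /2))).

(* A subset of T is a 1-periodic predicate on R *)
Definition periodic (S : R -> Prop) : Prop := forall x, S x <-> S (x + 1).

Definition openT (U : R -> Prop) : Prop :=
  periodic U /\ forall x, U x -> exists e, e > 0 /\ forall y, Rabs (y - x) < e -> U y.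

Definition closedT (C : R -> Prop) : Prop :=
  periodic C /\
  forall x, (forall e, e > 0 -> exists y, C y /\ Rabs (x - y) < e) -> C x.

Definition connectedT (S : R -> Prop) : Prop :=
  forall U V : R -> Prop, openT U -> openT V ->
    (forall x, S x -> U x \/ V x) ->
    (forall x, S x -> U x -> V x -> False) ->
    (forall x, S x -> U x) \/ (forall x, S x -> V x).

Definition totally_disconnectedT (C : R -> Prop) : Prop :=
  forall S : R -> Prop, (forall x, S x -> C x) -> connectedT S ->
    forall x y, S x -> S y -> eqT x y.

Definition perfectT (C : R -> Prop) : Prop :=
  forall x, C x -> forall e, e > 0 -> exists y, C y /\ 0 < distT x y < e.

(* Cantor set: compact (= closed, T being compact), totally disconnected,
   perfect, nonempty subset of T *)
Definition cantor_set (C : R -> Prop) : Prop :=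
  closedT C /\ (exists x, C x) /\ totally_disconnectedT C /\ perfectT C.

Definition gap (C : R -> Prop) (a b : R) : Prop :=
  a < b < a + 1 /\ C a /\ C b /\ (forall x, a < x < b -> ~ C x).

Definition in_arc (a b x : R) : Prop := exists k : Z, a <= x + IZR k <= b.

Definition simC (C : R -> Prop) (x y : R) : Prop :=
  eqT x y \/ exists a b, gap C a b /\ in_arc a b x /\ in_arc a b y.

Definition accessible (C : R -> Prop) (x : R) : Prop :=
  exists a b, gap C a b /\ (eqT x a \/ eqT x b).

(* F : R -> R is a lift of a continuous, degree one, monotone (cyclic order
   preserving) circle map P, P(xbar) = (F x)bar *)
Definition monotone_degree_one_lift (F : R -> R) : Prop :=
  continuity F /\ (forall x y, x <= y -> F x <= F y) /\
  (forall x, F (x + 1) = F x + 1).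

Definition cantor_function (C : R -> Prop) (F : R -> R) : Prop :=
  monotone_degree_one_lift F /\ forall x y, eqT (F x) (F y) <-> simC C x y.

Definition irrational (t : R) : Prop :=
  ~ exists p q : Z, q <> 0%Z /\ t = IZR p / IZR q.

(* Main.v *)
Require Import Defs.
From Stdlib Require Import Reals ZArith Lra Lia.
From Stdlib Require Import Classical.
Open Scope R_scope.

Notation fl := Int_part.

Lemma fl_spec r : IZR (fl r) <= r < IZR (fl r) + 1.
Proof. destruct (base_Int_part r). lra. Qed.

Lemma fl_unique r z : IZR z <= r < IZR z + 1 -> fl r = z.
Proof. intros. symmetry. apply Int_part_spec. lra. Qed.

Lemma IZR_lt_succ a b : IZR a < IZR b + 1 -> (a <= b)%Z.
Proof. intros. assert (IZR a < IZR (b+1)) by (rewrite plus_IZR; lra).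
 apply lt_IZR in H0. lia. Qed.

Lemma fl_IZR k : fl (IZR k) = k.
Proof. apply fl_unique. lra. Qed.

Lemma fl_plus_Z r k : fl (r + IZR k) = (fl r + k)%Z.
Proof. apply fl_unique. rewrite plus_IZR. pose proof (fl_spec r). lra. Qed.

Lemma fl_mono a b : a <= b -> (fl a <= fl b)%Z.
Proof. intros. pose proof (fl_spec a). pose proof (fl_spec b).
 apply IZR_lt_succ. lra. Qed.

Lemma fl_diff1 a b : a <= b < a + 1 -> (0 <= fl b - fl a <= 1)%Z.
Proof. intros. pose proof (fl_mono a b ltac:(lra)). pose proof (fl_spec a). pose proof (fl_spec b).
 assert (IZR (fl b) < IZR (fl a + 1) + 1) by (rewrite plus_IZR; lra).
 apply IZR_lt_succ in H3. lia. Qed.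

Lemma fl_neg_sum r : (-1 <= fl r + fl (-r) <= 0)%Z.
Proof. pose proof (fl_spec r). pose proof (fl_spec (-r)).
 split.
 - assert (IZR (-1) < IZR (fl r + fl (-r)) + 1) by (rewrite plus_IZR; lra).
   apply IZR_lt_succ in H1. lia.
 - assert (IZR (fl r + fl (-r)) < IZR 0 + 1) by (rewrite plus_IZR; lra).
   apply IZR_lt_succ in H1. lia. Qed.

Lemma fl_neg_sum0 r : (fl r + fl (-r) = 0)%Z -> r = IZR (fl r).
Proof. intros. pose proof (fl_spec r). pose proof (fl_spec (-r)).
 assert (fl (-r) = - fl r)%Z by lia. rewrite H2, opp_IZR in H1. lra. Qed.

Definition g (d y : R) : R := IZR (fl (y - d) - fl (-d)).
Definition gm (d y : R) : R := IZR (- fl (d - y) - 1 - fl (-d)).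

Lemma g_per1 d y : g d (y + 1) = g d y + 1.
Proof. unfold g. replace (y + 1 - d) with (y - d + IZR 1) by (simpl; lra).
 rewrite fl_plus_Z. rewrite !minus_IZR, plus_IZR. simpl. lra. Qed.

Lemma gm_per1 d y : gm d (y + 1) = gm d y + 1.
Proof. unfold gm. replace (d - (y + 1)) with (d - y + IZR (-1)) by (simpl; lra).
 rewrite fl_plus_Z. rewrite !minus_IZR, !opp_IZR, plus_IZR. simpl. lra. Qed.

Lemma g_half d y : g d (y + /2) + g (d + /2) (y + /2) = g d y + g (d + /2) y + 1.
Proof. unfold g. replace (y + /2 - (d + /2)) with (y - d) by lra.
 replace (y + /2 - d) with (y - (d + /2) + IZR 1) by (simpl; lra).
 rewrite fl_plus_Z. rewrite !minus_IZR, plus_IZR. simpl. lra. Qed.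

Lemma gm_half d y : gm d (y + /2) + gm (d + /2) (y + /2) = gm d y + gm (d + /2) y + 1.
Proof. unfold gm. replace (d + /2 - (y + /2)) with (d - y) by lra.
 replace (d - (y + /2)) with (d + /2 - y + IZR (-1)) by (simpl; lra).
 rewrite fl_plus_Z. rewrite !minus_IZR, !opp_IZR, plus_IZR. simpl. lra. Qed.

Lemma g_bound d y : y - 1 < g d y < y + 1.
Proof. unfold g. rewrite minus_IZR. pose proof (fl_spec (y - d)). pose proof (fl_spec (-d)). lra. Qed.

Lemma gm_g d y : gm d y <= g d y /\ g d y - gm d y <= 1.
Proof. unfold g, gm. pose proof (fl_neg_sum (y - d)).
 replace (- (y - d)) with (d - y) in H by lra.
 rewrite <- minus_IZR. split.
 - apply IZR_le. lia.
 - apply (IZR_le _ 1). lia. Qed.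

Lemma g_le_gm d y z : y < z -> g d y <= gm d z.
Proof. intros. unfold g, gm. apply IZR_le.
 pose proof (fl_spec (y - d)). pose proof (fl_spec (d - z)).
 assert (IZR (fl (y - d) + fl (d - z)) < IZR (-1) + 1) by (rewrite plus_IZR; simpl; lra).
 apply IZR_lt_succ in H2. lia. Qed.

Lemma g_eq_gm d y : ~ eqT y d -> g d y = gm d y.
Proof. intros. unfold g, gm. f_equal.
 pose proof (fl_neg_sum (y - d)). replace (- (y - d)) with (d - y) in H0 by lra.
 destruct (Z.eq_dec (fl (y - d) + fl (d - y)) 0).
 - exfalso. apply H. exists (fl (y - d)). apply fl_neg_sum0.
   replace (- (y - d)) with (d - y) by lra. auto.
 - lia. Qed.

Lemma g_gm_jump d y : eqT y d -> g d y - gm d y = 1.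
Proof. intros [k Hk]. unfold g, gm. rewrite <- minus_IZR.
 replace (d - y) with (IZR (-k)) by (rewrite opp_IZR; lra). rewrite Hk, !fl_IZR.
 replace (k - fl (- d) - (- - k - 1 - fl (- d)))%Z with 1%Z by lia.
 reflexivity. Qed.

Definition dlt (d y : R) : R := IZR (fl (y - d)) + 1 - (y - d).

Lemma dlt_pos d y : 0 < dlt d y.
Proof. unfold dlt. pose proof (fl_spec (y - d)). lra. Qed.

Lemma g_const d y z : y <= z < y + dlt d y -> g d z = g d y.
Proof. unfold dlt. intros. unfold g. f_equal. f_equal.
 apply fl_unique. pose proof (fl_spec (y - d)). lra. Qed.

Lemma g_diff d y z : y <= z < y + 1 -> 0 <= g d z - g d y <= 1.
Proof. intros. unfold g. rewrite <- minus_IZR.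
 pose proof (fl_diff1 (y - d) (z - d) ltac:(lra)). split.
 - apply (IZR_le 0). lia.
 - apply (IZR_le _ 1). lia. Qed.

Definition dltm (d y : R) : R := IZR (fl (d - y)) + 1 - (d - y).

Lemma dltm_pos d y : 0 < dltm d y.
Proof. unfold dltm. pose proof (fl_spec (d - y)). lra. Qed.

Lemma gm_const d y z : y - dltm d y < z <= y -> gm d z = gm d y.
Proof. unfold dltm. intros. unfold gm. f_equal. f_equal. f_equal. f_equal.
 apply fl_unique. pose proof (fl_spec (d - y)). lra. Qed.

Lemma gm_diff d y z : z <= y < z + 1 -> 0 <= gm d y - gm d z <= 1.
Proof. intros. unfold gm. rewrite <- minus_IZR.
 pose proof (fl_diff1 (d - y) (d - z) ltac:(lra)). split.
 - apply (IZR_le 0). lia.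
 - apply (IZR_le _ 1). lia. Qed.

From Coquelicot Require Import Coquelicot.

Definition Sw (c : nat -> R) : R := Series (fun m => (/2)^m * c m).
Definition bounded (c : nat -> R) : Prop := exists K, forall m, Rabs (c m) <= K.

Lemma half_pow_pos m : 0 < (/2)^m.
Proof. apply pow_lt. lra. Qed.

Lemma Sw_ex c : bounded c -> ex_series (fun m => (/2)^m * c m).
Proof. intros [K HK]. apply (@ex_series_le R_AbsRing R_CompleteNormedModule _ (fun m => K * (/2)^m)).
 - intros n. change (norm ((/2)^n * c n)) with (Rabs ((/2)^n * c n)).
   rewrite Rabs_mult, Rabs_right by (left; apply half_pow_pos).
   pose proof (half_pow_pos n). specialize (HK n). nra.
 - apply (ex_series_scal_l K (fun m => (/2)^m)). apply ex_series_geom. rewrite Rabs_right; lra.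
Qed.

Lemma geom_half : Series (fun m => (/2)^m) = 2.
Proof. assert (Habs: Rabs (/2) < 1) by (rewrite Rabs_right; lra).
 pose proof (is_series_geom _ Habs) as H. apply is_series_unique in H. rewrite H. field. Qed.

Lemma Sw_const K : Sw (fun _ => K) = 2 * K.
Proof. unfold Sw. rewrite (Series_ext _ (fun m => K * (/2)^m)) by (intros; ring).
 rewrite (Series_scal_l K (fun m => (/2)^m)). rewrite geom_half. ring. Qed.

Lemma bounded_const K : bounded (fun _ => K).
Proof. exists (Rabs K). intros; lra. Qed.

Lemma bounded_minus c d : bounded c -> bounded d -> bounded (fun m => c m - d m).
Proof. intros [K1 H1] [K2 H2]. exists (K1 + K2). intros m.
 eapply Rle_trans. apply Rabs_triang. rewrite Rabs_Ropp. specialize (H1 m). specialize (H2 m). lra. Qed.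

Lemma bounded_plus c d : bounded c -> bounded d -> bounded (fun m => c m + d m).
Proof. intros [K1 H1] [K2 H2]. exists (K1 + K2). intros m.
 eapply Rle_trans. apply Rabs_triang. specialize (H1 m). specialize (H2 m). lra. Qed.

Lemma Sw_minus c d : bounded c -> bounded d -> Sw c - Sw d = Sw (fun m => c m - d m).
Proof. intros. unfold Sw. rewrite <- Series_minus by (apply Sw_ex; auto).
 apply Series_ext. intros; ring. Qed.

Lemma Sw_plus c d : bounded c -> bounded d -> Sw c + Sw d = Sw (fun m => c m + d m).
Proof. intros. unfold Sw. rewrite <- Series_plus by (apply Sw_ex; auto).
 apply Series_ext. intros; ring. Qed.

Lemma Sw_nonneg c : bounded c -> (forall m, 0 <= c m) -> 0 <= Sw c.
Proof. intros. unfold Sw.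
 assert (Series (fun _ : nat => 0) <= Series (fun m => (/2)^m * c m)).
 { apply Series_le. intros; split; [lra|]. pose proof (half_pow_pos n). specialize (H0 n). nra.
   apply Sw_ex; auto. }
 rewrite (Series_ext (fun _ : nat => 0) (fun n => 0 * (/2)^n)) in H1 by (intros; ring).
 rewrite (Series_scal_l 0 (fun n => (/2)^n)) in H1. lra. Qed.

Lemma Sw_le c d : bounded c -> bounded d -> (forall m, c m <= d m) -> Sw c <= Sw d.
Proof. intros. assert (0 <= Sw d - Sw c); [|lra]. rewrite Sw_minus by auto.
 apply Sw_nonneg. apply bounded_minus; auto. intros m; specialize (H1 m); lra. Qed.

Lemma Sw_ext c d : (forall m, c m = d m) -> Sw c = Sw d.
Proof. intros. unfold Sw. apply Series_ext. intros; rewrite H; auto. Qed.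

Lemma bounded_shift c : bounded c -> bounded (fun k => c (S k)).
Proof. intros [K HK]. exists K. auto. Qed.

Lemma Sw_shift c : bounded c -> Sw c = c 0%nat + /2 * Sw (fun k => c (S k)).
Proof. intros. unfold Sw. rewrite Series_incr_1 by (apply Sw_ex; auto).
 rewrite <- Series_scal_l. f_equal. simpl; ring. apply Series_ext. intros; simpl; ring. Qed.

Lemma Sw_tail N : forall c K, (forall m, 0 <= c m <= K) -> (forall m, (m < N)%nat -> c m = 0) ->
  Sw c <= 2 * K * (/2)^N.
Proof. induction N; intros c K H1 H2.
 - simpl. rewrite Rmult_1_r, <- Sw_const. apply Sw_le.
   + exists K. intros m. specialize (H1 m). rewrite Rabs_right; lra.
   + apply bounded_const.
   + intros; apply H1.
 - assert (bounded c) by (exists K; intros m; specialize (H1 m); rewrite Rabs_right; lra).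
   rewrite Sw_shift by auto. rewrite H2 by lia.
   specialize (IHN (fun k => c (S k)) K ltac:(intros; apply H1) ltac:(intros; apply H2; lia)).
   simpl. lra. Qed.

Lemma Sw_single m : forall c, bounded c -> (forall k, 0 <= c k) -> (/2)^m * c m <= Sw c.
Proof. induction m; intros c Hb Hc.
 - rewrite Sw_shift by auto. simpl.
   pose proof (Sw_nonneg _ (bounded_shift _ Hb) (fun k => Hc (S k))). lra.
 - rewrite Sw_shift by auto. specialize (IHm _ (bounded_shift _ Hb) (fun k => Hc (S k))).
   simpl. pose proof (Hc 0%nat). lra. Qed.

Definition zz (m : nat) : Z :=
  if Nat.even m then Z.of_nat (Nat.div2 m) else (- Z.of_nat (S (Nat.div2 m)))%Z.

Lemma zz_surj n : exists m, zz m = n.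
Proof. destruct (Z_le_gt_dec 0 n).
 - exists (2 * Z.to_nat n)%nat. unfold zz. rewrite Nat.even_mul. change (Nat.even 2) with true. cbv [orb].
   rewrite Nat.div2_double. lia.
 - exists (S (2 * Z.to_nat (- n - 1)))%nat. unfold zz.
   rewrite Nat.even_succ, Nat.odd_mul. change (Nat.odd 2) with false. cbv [andb].
   rewrite Nat.div2_succ_double. lia.
Qed.

Lemma Rabs_bound_y y a b : y - a <= b -> b <= y + a -> Rabs b <= Rabs y + a.
Proof. intros. pose proof (Rle_abs y). pose proof (Rle_abs (-y)). rewrite Rabs_Ropp in H2.
 apply Rabs_le. lra. Qed.

Section Construction.
Variables phi tau : R.

Definition p (m : nat) : R := phi + IZR (zz m) * tau.
Definition G (y : R) (m : nat) : R := g (p m) y + g (p m + /2) y.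
Definition Gm (y : R) (m : nat) : R := gm (p m) y + gm (p m + /2) y.
Definition SS (y : R) : R := Sw (G y).
Definition SSm (y : R) : R := Sw (Gm y).
Definition H (y : R) : R := y / 2 + SS y / 8.
Definition Hm (y : R) : R := y / 2 + SSm y / 8.

Lemma G_bounds y m : 2 * y - 2 <= G y m <= 2 * y + 2.
Proof. unfold G. pose proof (g_bound (p m) y). pose proof (g_bound (p m + /2) y). lra. Qed.

Lemma Gm_bounds y m : 2 * y - 4 <= Gm y m <= G y m.
Proof. unfold G, Gm. pose proof (g_bound (p m) y). pose proof (g_bound (p m + /2) y).
 pose proof (gm_g (p m) y). pose proof (gm_g (p m + /2) y). lra. Qed.

Lemma bG y : bounded (G y).
Proof. exists (Rabs (2 * y) + 4). intros m. pose proof (G_bounds y m). apply Rabs_bound_y; lra. Qed.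

Lemma bGm y : bounded (Gm y).
Proof. exists (Rabs (2 * y) + 4). intros m. pose proof (G_bounds y m). pose proof (Gm_bounds y m).
 apply Rabs_bound_y; lra. Qed.

Lemma S_shift y c : (forall m, G (y + c) m = G y m + 2 * c) -> SS (y + c) = SS y + 4 * c.
Proof. intros. unfold SS. rewrite (Sw_ext _ (fun m => G y m + (2 * c))) by auto.
 rewrite <- Sw_plus by (apply bG || apply bounded_const). rewrite Sw_const. ring. Qed.

Lemma Sm_shift y c : (forall m, Gm (y + c) m = Gm y m + 2 * c) -> SSm (y + c) = SSm y + 4 * c.
Proof. intros. unfold SSm. rewrite (Sw_ext _ (fun m => Gm y m + (2 * c))) by auto.
 rewrite <- Sw_plus by (apply bGm || apply bounded_const). rewrite Sw_const. ring. Qed.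

Lemma H_per1 y : H (y + 1) = H y + 1.
Proof. unfold H. rewrite (S_shift y 1). field. intros m. unfold G. rewrite !g_per1. ring. Qed.

Lemma Hm_per1 y : Hm (y + 1) = Hm y + 1.
Proof. unfold Hm. rewrite (Sm_shift y 1). field. intros m. unfold Gm. rewrite !gm_per1. ring. Qed.

Lemma H_half y : H (y + /2) = H y + /2.
Proof. unfold H. rewrite (S_shift y (/2)). field. intros m. unfold G.
 rewrite g_half. field. Qed.

Lemma Hm_half y : Hm (y + /2) = Hm y + /2.
Proof. unfold Hm. rewrite (Sm_shift y (/2)). field. intros m. unfold Gm.
 rewrite gm_half. field. Qed.

Lemma H_mono y z : y < z -> H y + (z - y) / 2 <= Hm z.
Proof. intros. unfold H, Hm. assert (SS y <= SSm z); [|lra].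
 apply Sw_le; try apply bG; try apply bGm. intros m. unfold G, Gm.
 pose proof (g_le_gm (p m) y z H0). pose proof (g_le_gm (p m + /2) y z H0). lra. Qed.

Lemma Hm_le_H y : Hm y <= H y.
Proof. unfold H, Hm. assert (SSm y <= SS y); [|lra].
 apply Sw_le; try apply bG; try apply bGm. intros m. apply Gm_bounds. Qed.

Lemma H_jump_small y : H y - Hm y <= /2.
Proof. unfold H, Hm. assert (SS y - SSm y <= 4); [|lra].
 unfold SS, SSm. rewrite Sw_minus by (apply bG || apply bGm).
 replace 4 with (2 * 2) by ring. rewrite <- Sw_const. apply Sw_le.
 apply bounded_minus; [apply bG | apply bGm]. apply bounded_const.
 intros m. unfold G, Gm. pose proof (gm_g (p m) y). pose proof (gm_g (p m + /2) y). lra. Qed.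

Lemma H_bound y : y - 1 <= H y <= y + 1.
Proof. unfold H. assert (4 * y - 4 <= SS y <= 4 * y + 4); [|lra]. unfold SS. split.
 - replace (4 * y - 4) with (2 * (2 * y - 2)) by ring. rewrite <- Sw_const.
   apply Sw_le. apply bounded_const. apply bG. intros; apply G_bounds.
 - replace (4 * y + 4) with (2 * (2 * y + 2)) by ring. rewrite <- Sw_const.
   apply Sw_le. apply bG. apply bounded_const. intros; apply G_bounds. Qed.

Lemma H_jump_pos e m : eqT e (p m) \/ eqT e (p m + /2) -> Hm e < H e.
Proof. intros Hq. unfold H, Hm. assert (0 < SS e - SSm e); [|lra].
 unfold SS, SSm. rewrite Sw_minus by (apply bG || apply bGm).
 assert (Hnn : forall k, 0 <= G e k - Gm e k) by (intros k; pose proof (Gm_bounds e k); lra).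
 pose proof (Sw_single m _ (bounded_minus _ _ (bG e) (bGm e)) Hnn).
 assert (1 <= G e m - Gm e m).
 { unfold G, Gm. pose proof (gm_g (p m) e). pose proof (gm_g (p m + /2) e).
   destruct Hq as [Hq|Hq]; apply g_gm_jump in Hq; lra. }
 pose proof (half_pow_pos m). nra. Qed.

Lemma H_jump_at y : Hm y < H y -> exists m, eqT y (p m) \/ eqT y (p m + /2).
Proof. intros. apply NNPP. intros Hn. assert (SS y = SSm y); [|unfold H, Hm in H0; lra].
 apply Sw_ext. intros m. unfold G, Gm.
 rewrite (g_eq_gm (p m) y), (g_eq_gm (p m + /2) y); auto.
 - intro; apply Hn; exists m; auto.
 - intro; apply Hn; exists m; auto. Qed.


Fixpoint dmin (N : nat) (y : R) : R :=
  match N with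
  | O => 1
  | Datatypes.S n => Rmin (dmin n y) (Rmin (dlt (p n) y) (dlt (p n + /2) y))
  end.

Lemma dmin_prop N y : 0 < dmin N y <= 1 /\
  forall m, (m < N)%nat -> dmin N y <= dlt (p m) y /\ dmin N y <= dlt (p m + /2) y.
Proof. induction N; simpl.
 - split; [lra|]. intros; lia.
 - destruct IHN as [[H1 H2] H3]. pose proof (dlt_pos (p N) y). pose proof (dlt_pos (p N + /2) y).
   split.
   + split. repeat apply Rmin_glb_lt; auto.
     eapply Rle_trans. apply Rmin_l. auto.
   + intros m Hm. destruct (Nat.eq_dec m N).
     * subst m. pose proof (Rmin_r (dmin N y) (Rmin (dlt (p N) y) (dlt (p N + /2) y))).
       pose proof (Rmin_l (dlt (p N) y) (dlt (p N + /2) y)).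
       pose proof (Rmin_r (dlt (p N) y) (dlt (p N + /2) y)). split; lra.
     * destruct (H3 m ltac:(lia)).
       pose proof (Rmin_l (dmin N y) (Rmin (dlt (p N) y) (dlt (p N + /2) y))). split; lra.
Qed.

Fixpoint dminm (N : nat) (y : R) : R :=
  match N with
  | O => 1
  | Datatypes.S n => Rmin (dminm n y) (Rmin (dltm (p n) y) (dltm (p n + /2) y))
  end.

Lemma dminm_prop N y : 0 < dminm N y <= 1 /\
  forall m, (m < N)%nat -> dminm N y <= dltm (p m) y /\ dminm N y <= dltm (p m + /2) y.
Proof. induction N; simpl.
 - split; [lra|]. intros; lia.
 - destruct IHN as [[H1 H2] H3]. pose proof (dltm_pos (p N) y). pose proof (dltm_pos (p N + /2) y).
   split.
   + split. repeat apply Rmin_glb_lt; auto.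
     eapply Rle_trans. apply Rmin_l. auto.
   + intros m Hm. destruct (Nat.eq_dec m N).
     * subst m. pose proof (Rmin_r (dminm N y) (Rmin (dltm (p N) y) (dltm (p N + /2) y))).
       pose proof (Rmin_l (dltm (p N) y) (dltm (p N + /2) y)).
       pose proof (Rmin_r (dltm (p N) y) (dltm (p N + /2) y)). split; lra.
     * destruct (H3 m ltac:(lia)).
       pose proof (Rmin_l (dminm N y) (Rmin (dltm (p N) y) (dltm (p N + /2) y))). split; lra.
Qed.

Lemma small_pow e : 0 < e -> exists N, (/2)^N < e.
Proof. intros. destruct (pow_lt_1_zero (/2) ltac:(rewrite Rabs_right; lra) e H0) as [N HN].
 exists N. specialize (HN N (le_n N)). rewrite Rabs_right in HN; auto.
 left; apply half_pow_pos. Qed.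

Lemma H_right y e : 0 < e -> exists d, 0 < d /\ forall z, y <= z < y + d -> H z <= H y + e.
Proof. intros He. destruct (small_pow e He) as [N HN].
 destruct (dmin_prop N y) as [[D1 D2] D3].
 exists (Rmin (dmin N y) e). split. apply Rmin_glb_lt; auto.
 intros z Hz. pose proof (Rmin_l (dmin N y) e). pose proof (Rmin_r (dmin N y) e).
 unfold H. assert (SS z - SS y <= 2 * 2 * (/2)^N); [|lra].
 unfold SS. rewrite Sw_minus by apply bG. apply Sw_tail.
 - intros m. unfold G. pose proof (g_diff (p m) y z ltac:(lra)). pose proof (g_diff (p m + /2) y z ltac:(lra)). lra.
 - intros m Hm. destruct (D3 m Hm). unfold G.
   rewrite (g_const (p m) y z), (g_const (p m + /2) y z) by lra. ring.
Qed.

Lemma Hm_left y e : 0 < e -> exists d, 0 < d /\ forall z, y - d < z <= y -> Hm y - e <= Hm z.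
Proof. intros He. destruct (small_pow e He) as [N HN].
 destruct (dminm_prop N y) as [[D1 D2] D3].
 exists (Rmin (dminm N y) e). split. apply Rmin_glb_lt; auto.
 intros z Hz. pose proof (Rmin_l (dminm N y) e). pose proof (Rmin_r (dminm N y) e).
 unfold Hm. assert (SSm y - SSm z <= 2 * 2 * (/2)^N); [|lra].
 unfold SSm. rewrite Sw_minus by apply bGm. apply Sw_tail.
 - intros m. unfold Gm. pose proof (gm_diff (p m) y z ltac:(lra)). pose proof (gm_diff (p m + /2) y z ltac:(lra)). lra.
 - intros m Hm. destruct (D3 m Hm). unfold Gm.
   rewrite (gm_const (p m) y z), (gm_const (p m + /2) y z) by lra. ring.
Qed.

Hypothesis Htau : irrational tau.

Lemma not_int_mult n k q : 0 < IZR n * tau + IZR k < 1 -> (1 <= q)%Z ->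
  IZR q * (IZR n * tau + IZR k) <> 1.
Proof.
 intros Hx Hq Heq. destruct (Z.eq_dec n 0).
 - subst. rewrite Rmult_0_l, Rplus_0_l in Hx. destruct Hx as [A B].
   apply lt_IZR in A. apply (lt_IZR k 1) in B. lia.
 - apply Htau. exists (1 - q*k)%Z, (q*n)%Z. split. nia.
   assert (IZR q <> 0) by (intro E; apply eq_IZR in E; lia).
   assert (IZR n <> 0) by (intro E; apply eq_IZR in E; lia).
   rewrite minus_IZR, !mult_IZR.
   replace (IZR 1 - IZR q * IZR k) with (IZR q * IZR n * tau) by (simpl; nra).
   field. split; auto.
Qed.

Lemma small_elt N : exists n k : Z, 0 < IZR n * tau + IZR k < 1 /\ IZR n * tau + IZR k <= (/2)^N.
Proof. induction N.
 - exists 1%Z, (- fl tau)%Z. pose proof (fl_spec tau). rewrite opp_IZR. simpl (IZR 1).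
   assert (tau - IZR (fl tau) <> 0).
   { intro E. apply Htau. exists (fl tau), 1%Z. split. lia. simpl (IZR 1). field_simplify. lra. }
   simpl. lra.
 - destruct IHN as [n [k [Hx Hle]]]. set (x := IZR n * tau + IZR k) in *.
   assert (Hinv : x * / x = 1) by (field; lra).
   assert (Hix : 1 < / x).
   { rewrite <- Rinv_1. apply Rinv_lt_contravar; lra. }
   set (q := fl (/ x)).
   assert (Hq1 : (1 <= q)%Z).
   { pose proof (fl_mono 1 (/ x) ltac:(lra)). rewrite (fl_IZR 1) in H0. auto. }
   pose proof (fl_spec (/ x)) as Hqs. fold q in Hqs.
   assert (A1 : IZR q * x <= 1) by nra.
   assert (A2 : 1 < IZR q * x + x) by nra.
   pose proof (not_int_mult n k q Hx Hq1). fold x in H0.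
   set (r := 1 - IZR q * x).
   assert (Hr : 0 < r < x) by (unfold r; lra).
   simpl pow.
   destruct (Rle_dec r (x / 2)).
   + exists (- q * n)%Z, (1 - q * k)%Z.
     replace (IZR (- q * n) * tau + IZR (1 - q * k)) with r.
     2:{ unfold r, x. rewrite minus_IZR, !mult_IZR, opp_IZR. simpl. ring. }
     lra.
   + exists (n + q * n)%Z, (k - 1 + q * k)%Z.
     replace (IZR (n + q * n) * tau + IZR (k - 1 + q * k)) with (x - r).
     2:{ unfold r, x. rewrite !plus_IZR, minus_IZR, !mult_IZR. simpl. ring. }
     lra.
Qed.

Lemma density u v : u < v -> exists m k, u < p m + IZR k < v.
Proof. intros Huv. destruct (small_pow (v - u) ltac:(lra)) as [N HN].
 destruct (small_elt N) as [n [k [Hx Hle]]]. set (x := IZR n * tau + IZR k) in *.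
 assert (Hinv : x * / x = 1) by (field; lra).
 set (j := (fl ((u - phi) / x) + 1)%Z).
 pose proof (fl_spec ((u - phi) / x)) as Hj.
 assert (Hj1 : IZR j = IZR (fl ((u - phi) / x)) + 1) by (unfold j; rewrite plus_IZR; auto).
 assert (B1 : u - phi < IZR j * x).
 { assert ((u - phi) / x * x = u - phi) by (field; lra). nra. }
 assert (B2 : IZR j * x <= u - phi + x).
 { assert ((u - phi) / x * x = u - phi) by (field; lra). nra. }
 destruct (zz_surj (j * n)) as [m Hm].
 exists m, (j * k)%Z. unfold p. rewrite Hm, !mult_IZR.
 replace (phi + IZR j * IZR n * tau + IZR j * IZR k) with (phi + IZR j * x) by (unfold x; ring).
 lra.
Qed.

Definition Fset (x y : R) : Prop := H y <= x.

Lemma Fset_bound x : bound (Fset x).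
Proof. exists (x + 1). intros y Hy. unfold Fset in Hy. pose proof (H_bound y). lra. Qed.

Lemma Fset_ne x : exists y, Fset x y.
Proof. exists (x - 1). unfold Fset. pose proof (H_bound (x - 1)). lra. Qed.

Definition F (x : R) : R := proj1_sig (completeness (Fset x) (Fset_bound x) (Fset_ne x)).

Lemma F_lub x : is_lub (Fset x) (F x).
Proof. unfold F. destruct completeness. auto. Qed.

Lemma F_ub x y : H y <= x -> y <= F x.
Proof. intros. apply (proj1 (F_lub x)). auto. Qed.

Lemma F_P1 x : Hm (F x) <= x <= H (F x).
Proof. set (s := F x). split.
 - apply NNPP. intro Hn. apply Rnot_le_lt in Hn.
   destruct (Hm_left s ((Hm s - x) / 2) ltac:(lra)) as [d [Hd Hdz]].
   assert (is_upper_bound (Fset x) (s - d)).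
   { intros y Hy. unfold Fset in Hy. destruct (Rle_dec y (s - d)); auto. exfalso.
     assert (y <= s) by (apply (proj1 (F_lub x)); auto).
     specialize (Hdz y ltac:(lra)). pose proof (Hm_le_H y). lra. }
   pose proof (proj2 (F_lub x) _ H0). fold s in H1. lra.
 - apply NNPP. intro Hn. apply Rnot_le_lt in Hn.
   destruct (H_right s (x - H s) ltac:(lra)) as [d [Hd Hdz]].
   specialize (Hdz (s + d / 2) ltac:(lra)).
   pose proof (F_ub x (s + d / 2) ltac:(lra)). fold s in H0. lra.
Qed.

Lemma F_P3 x y : Hm y <= x <= H y -> F x = y.
Proof. intros Hxy. apply Rle_antisym.
 - apply (proj2 (F_lub x)). intros z Hz. unfold Fset in Hz.
   destruct (Rle_dec z y); auto. exfalso.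
   pose proof (H_mono y z ltac:(lra)). pose proof (Hm_le_H z). lra.
 - apply NNPP. intro Hn. apply Rnot_le_lt in Hn.
   pose proof (H_mono ((F x + y) / 2) y ltac:(lra)).
   pose proof (F_ub x ((F x + y) / 2) ltac:(lra)). lra.
Qed.

Lemma F_H y : F (H y) = y.
Proof. apply F_P3. pose proof (Hm_le_H y). lra. Qed.

Lemma F_Hm y : F (Hm y) = y.
Proof. apply F_P3. pose proof (Hm_le_H y). lra. Qed.

Lemma F_mono x1 x2 : x1 <= x2 -> F x1 <= F x2.
Proof. intros. destruct (Rle_dec (F x1) (F x2)); auto. exfalso.
 pose proof (F_P1 x1). pose proof (F_P1 x2). pose proof (H_mono (F x2) (F x1) ltac:(lra)). lra. Qed.

Lemma F_lip x1 x2 : x1 <= x2 -> F x2 - F x1 <= 2 * (x2 - x1).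
Proof. intros. pose proof (F_mono x1 x2 H0). destruct (Req_dec (F x1) (F x2)). lra.
 pose proof (F_P1 x1). pose proof (F_P1 x2). pose proof (H_mono (F x1) (F x2) ltac:(lra)). lra. Qed.

Lemma F_per1 x : F (x + 1) = F x + 1.
Proof. apply F_P3. rewrite H_per1, Hm_per1. pose proof (F_P1 x). lra. Qed.

Lemma F_half x : F (x + /2) = F x + /2.
Proof. apply F_P3. rewrite H_half, Hm_half. pose proof (F_P1 x). lra. Qed.

Lemma F_cont : continuity F.
Proof. intros x. unfold continuity_pt, continue_in, limit1_in, limit_in. intros e He.
 exists (e / 2). split. lra. intros x' [_ Hx']. simpl in *. unfold R_dist in *.
 destruct (Rle_dec x x').
 - pose proof (F_lip x x' r). pose proof (F_mono x x' r).
   rewrite Rabs_right in Hx' |- *; lra.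
 - pose proof (F_lip x' x ltac:(lra)). pose proof (F_mono x' x ltac:(lra)).
   rewrite Rabs_left1 in Hx' |- *; lra.
Qed.

Lemma shiftZ (f : R -> R) : (forall y, f (y + 1) = f y + 1) -> forall k y, f (y + IZR k) = f y + IZR k.
Proof. intros Hf.
 assert (Hn : forall n y, f (y + INR n) = f y + INR n).
 { induction n; intros y. simpl. rewrite !Rplus_0_r. auto.
   rewrite S_INR. replace (y + (INR n + 1)) with (y + INR n + 1) by ring. rewrite Hf, IHn. ring. }
 intros k y. destruct (Z_le_gt_dec 0 k).
 - replace k with (Z.of_nat (Z.to_nat k)) by lia. rewrite <- INR_IZR_INZ. auto.
 - replace k with (- Z.of_nat (Z.to_nat (- k)))%Z by lia. rewrite opp_IZR, <- INR_IZR_INZ.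
   specialize (Hn (Z.to_nat (- k)) (y + - INR (Z.to_nat (- k)))).
   replace (y + - INR (Z.to_nat (- k)) + INR (Z.to_nat (- k))) with y in Hn by ring. lra.
Qed.

Lemma H_shiftZ k y : H (y + IZR k) = H y + IZR k.
Proof. apply shiftZ. apply H_per1. Qed.
Lemma Hm_shiftZ k y : Hm (y + IZR k) = Hm y + IZR k.
Proof. apply shiftZ. apply Hm_per1. Qed.
Lemma F_shiftZ k y : F (y + IZR k) = F y + IZR k.
Proof. apply shiftZ. apply F_per1. Qed.

Definition Cs (x : R) : Prop := exists y, x = H y \/ x = Hm y.

Lemma C_char x : Cs x <-> x = H (F x) \/ x = Hm (F x).
Proof. split.
 - intros [y [E|E]]; subst x; [rewrite F_H | rewrite F_Hm]; auto.
 - intros. exists (F x). auto. Qed.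

Lemma notC_between y x : Hm y < x < H y -> ~ Cs x.
Proof. intros Hx HC. apply C_char in HC. rewrite (F_P3 x y) in HC by lra. lra. Qed.

Lemma C_shiftZ k x : Cs x -> Cs (x + IZR k).
Proof. intros [y [E|E]]; exists (y + IZR k); subst x; [left; rewrite H_shiftZ | right; rewrite Hm_shiftZ]; auto. Qed.

Lemma C_between a b : a < b -> Cs a -> Cs b -> exists c, a < c < b /\ ~ Cs c.
Proof. intros Hab Ca Cb. pose proof (F_mono a b ltac:(lra)).
 pose proof (F_P1 a). pose proof (F_P1 b). pose proof (Hm_le_H (F a)). pose proof (Hm_le_H (F b)).
 destruct (Req_dec (F a) (F b)) as [E|E].
 - apply C_char in Ca. apply C_char in Cb. rewrite <- E in Cb.
   assert (a = Hm (F a) /\ b = H (F a)) by (destruct Ca, Cb; lra).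
   exists ((a + b) / 2). split. lra. apply (notC_between (F a)). lra.
 - destruct (density (F a) (F b) ltac:(lra)) as [m [k Hk]].
   set (e := p m + IZR k) in *.
   assert (Hj : Hm e < H e).
   { apply (H_jump_pos e m). left. exists k. unfold e. ring. }
   pose proof (H_mono (F a) e ltac:(lra)). pose proof (H_mono e (F b) ltac:(lra)).
   exists ((Hm e + H e) / 2). split. lra. apply (notC_between e). lra.
Qed.

Lemma abs_lt a e : Rabs a < e -> - e < a < e.
Proof. intros. apply Rabs_def2 in H0. lra. Qed.

Lemma C_closed : closedT Cs.
Proof. split.
 - intros x. split.
   + intros. replace (x + 1) with (x + IZR 1) by (simpl; ring). apply C_shiftZ; auto.
   + intros. replace x with (x + 1 + IZR (-1)) by (simpl; ring). apply C_shiftZ; auto.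
 - intros x Hx. apply NNPP. intros nC.
   pose proof (F_P1 x). set (s := F x) in *.
   assert (Hm s < x < H s).
   { assert (x <> H s) by (intro; apply nC; exists s; auto).
     assert (x <> Hm s) by (intro; apply nC; exists s; auto). lra. }
   destruct (Hx (Rmin (x - Hm s) (H s - x)) ltac:(apply Rmin_glb_lt; lra)) as [y [Cy Hy]].
   apply abs_lt in Hy. pose proof (Rmin_l (x - Hm s) (H s - x)). pose proof (Rmin_r (x - Hm s) (H s - x)).
   apply (notC_between s y); auto. lra.
Qed.

Lemma distT_small x y : Rabs (x - y) < /2 -> distT x y = Rabs (x - y).
Proof. intros. unfold distT. apply abs_lt in H0. rewrite (fl_unique (x - y + /2) 0).
 simpl. rewrite Rminus_0_r. auto. simpl. lra. Qed.

Lemma C_perfect : perfectT Cs.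
Proof. intros x Cx e He. set (e' := Rmin e (/2) / 2).
 assert (He' : 0 < e' < e /\ e' < /2).
 { unfold e'. pose proof (Rmin_l e (/2)). pose proof (Rmin_r e (/2)).
   assert (0 < Rmin e (/2)) by (apply Rmin_glb_lt; lra). lra. }
 destruct Cx as [s [E|E]].
 - destruct (H_right s e' ltac:(lra)) as [d [Hd Hdz]].
   set (z := s + d / 2). assert (Hz : s < z < s + d) by (unfold z; lra). clearbody z.
   specialize (Hdz z ltac:(lra)).
   pose proof (H_mono s z ltac:(lra)). pose proof (Hm_le_H z).
   exists (H z). split. exists z; auto. subst x.
   rewrite distT_small; rewrite Rabs_left; try split; lra.
 - destruct (Hm_left s e' ltac:(lra)) as [d [Hd Hdz]].
   set (z := s - d / 2). assert (Hz : s - d < z < s) by (unfold z; lra). clearbody z.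
   specialize (Hdz z ltac:(lra)).
   pose proof (H_mono z s ltac:(lra)). pose proof (Hm_le_H z).
   exists (H z). split. exists z; auto. subst x.
   rewrite distT_small; rewrite Rabs_right; try split; lra.
Qed.

Lemma C_td : totally_disconnectedT Cs.
Proof. intros Sx HSC Hconn x y Sxx Syy. apply NNPP. intros Hne.
 set (k := fl (y - x)). pose proof (fl_spec (y - x)) as Hk. fold k in Hk.
 set (y' := y - IZR k).
 assert (Hy' : x < y' < x + 1).
 { assert (y' <> x). { intro E. apply Hne. exists (- k)%Z. rewrite opp_IZR. unfold y' in E. lra. }
   unfold y' in *. lra. }
 assert (Cy' : Cs y'). { unfold y'. replace (y - IZR k) with (y + IZR (-k)) by (rewrite opp_IZR; ring).
   apply C_shiftZ. auto. }
 assert (Cx1 : Cs (x + 1)). { replace (x + 1) with (x + IZR 1) by (simpl; ring). apply C_shiftZ. auto. }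
 destruct (C_between x y' ltac:(lra) (HSC x Sxx) Cy') as [c1 [Hc1 nC1]].
 destruct (C_between y' (x + 1) ltac:(lra) Cy' Cx1) as [c2 [Hc2 nC2]].
 set (U := fun z => exists j : Z, c1 + IZR j < z < c2 + IZR j).
 set (V := fun z => exists j : Z, c2 + IZR j < z < c1 + 1 + IZR j).
 assert (disj : forall z, U z -> V z -> False).
 { intros z [j1 Hj1] [j2 Hj2].
   assert (IZR j2 < IZR j1) by lra. apply lt_IZR in H0.
   assert (IZR j1 < IZR j2 + 1) by lra. apply IZR_lt_succ in H1. lia. }
 assert (oU : openT U).
 { split.
   - intros z. split.
     + intros [j Hj]. exists (j + 1)%Z. rewrite plus_IZR. simpl. lra.
     + intros [j Hj]. exists (j - 1)%Z. rewrite minus_IZR. simpl. lra.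
   - intros z [j Hj]. exists (Rmin (z - (c1 + IZR j)) (c2 + IZR j - z)). split.
     apply Rmin_glb_lt; lra.
     intros w Hw. apply abs_lt in Hw. pose proof (Rmin_l (z - (c1 + IZR j)) (c2 + IZR j - z)).
     pose proof (Rmin_r (z - (c1 + IZR j)) (c2 + IZR j - z)). exists j. lra. }
 assert (oV : openT V).
 { split.
   - intros z. split.
     + intros [j Hj]. exists (j + 1)%Z. rewrite plus_IZR. simpl. lra.
     + intros [j Hj]. exists (j - 1)%Z. rewrite minus_IZR. simpl. lra.
   - intros z [j Hj]. exists (Rmin (z - (c2 + IZR j)) (c1 + 1 + IZR j - z)). split.
     apply Rmin_glb_lt; lra.
     intros w Hw. apply abs_lt in Hw. pose proof (Rmin_l (z - (c2 + IZR j)) (c1 + 1 + IZR j - z)).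
     pose proof (Rmin_r (z - (c2 + IZR j)) (c1 + 1 + IZR j - z)). exists j. lra. }
 assert (cover : forall z, Sx z -> U z \/ V z).
 { intros z Sz. pose proof (HSC z Sz) as Cz.
   set (j := fl (z - c1)). pose proof (fl_spec (z - c1)) as Hj. fold j in Hj.
   assert (z <> c1 + IZR j).
   { intro E. apply nC1. replace c1 with (z + IZR (- j)) by (rewrite opp_IZR; lra). apply C_shiftZ; auto. }
   assert (z <> c2 + IZR j).
   { intro E. apply nC2. replace c2 with (z + IZR (- j)) by (rewrite opp_IZR; lra). apply C_shiftZ; auto. }
   destruct (Rlt_le_dec z (c2 + IZR j)).
   - left. exists j. lra.
   - right. exists j. lra. }
 destruct (Hconn U V oU oV cover (fun z _ => disj z)) as [A|A].
 - apply (disj x). apply A; auto. exists (-1)%Z. simpl. lra.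
 - apply (disj y). exists k. unfold y' in *. lra. apply A; auto.
Qed.

Lemma gap_F a b : gap Cs a b -> F a = F b /\ a = Hm (F a) /\ b = H (F a).
Proof. intros [Hab [Ca [Cb Hno]]].
 assert (E : F a = F b).
 { pose proof (F_mono a b ltac:(lra)). destruct (Req_dec (F a) (F b)); auto. exfalso.
   pose proof (F_P1 a). pose proof (F_P1 b).
   set (t := (F a + F b) / 2). assert (F a < t < F b) by (unfold t; lra). clearbody t.
   pose proof (H_mono (F a) t ltac:(lra)). pose proof (H_mono t (F b) ltac:(lra)).
   pose proof (Hm_le_H t).
   apply (Hno (H t)). lra. exists t; auto. }
 split; auto.
 apply C_char in Ca. apply C_char in Cb. rewrite <- E in Cb. pose proof (Hm_le_H (F a)).
 destruct Ca, Cb; lra.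
Qed.

Lemma jump_gap s : Hm s < H s -> gap Cs (Hm s) (H s).
Proof. intros. pose proof (H_jump_small s). split. lra. split. exists s; auto. split. exists s; auto.
 intros x Hx. apply (notC_between s x Hx). Qed.

Lemma eqT_trans x y z : eqT x y -> eqT y z -> eqT x z.
Proof. intros [a Ha] [b Hb]. exists (a + b)%Z. rewrite plus_IZR. lra. Qed.
Lemma eqT_sym x y : eqT x y -> eqT y x.
Proof. intros [a Ha]. exists (- a)%Z. rewrite opp_IZR. lra. Qed.
Lemma eqT_eq x y : x = y -> eqT x y.
Proof. intros. exists 0%Z. simpl. lra. Qed.

Lemma F_cf : cantor_function Cs F.
Proof. split. split. apply F_cont. split. apply F_mono. apply F_per1.
 intros x y. split.
 - intros [k Hk]. set (s := F x).
   assert (Ey : F (y + IZR k) = s) by (rewrite F_shiftZ; unfold s; lra).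
   pose proof (F_P1 x). pose proof (F_P1 (y + IZR k)). rewrite Ey in H1. fold s in H0.
   destruct (Req_dec (Hm s) (H s)).
   + left. exists k. lra.
   + right. exists (Hm s), (H s). pose proof (Hm_le_H s). split. apply jump_gap; lra.
     split. exists 0%Z. simpl. lra. exists k. lra.
 - intros [[k Hk] | [a [b [Hg [[k Hk] [j Hj]]]]]].
   + exists k. replace x with (y + IZR k) by lra. rewrite F_shiftZ. ring.
   + destruct (gap_F a b Hg) as [E _].
     assert (F (x + IZR k) = F a).
     { apply Rle_antisym. rewrite E. apply F_mono; lra. apply F_mono; lra. }
     assert (F (y + IZR j) = F a).
     { apply Rle_antisym. rewrite E. apply F_mono; lra. apply F_mono; lra. }
     rewrite !F_shiftZ in *. exists (j - k)%Z. rewrite minus_IZR. lra.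
Qed.

Lemma acc_image y : (exists x, accessible Cs x /\ eqT (F x) y) <->
  (exists n : Z, eqT y (phi + IZR n * tau) \/ eqT y ((phi + /2) + IZR n * tau)).
Proof. split.
 - intros [x [[a [b [Hg Hx]]] Hy]]. destruct (gap_F a b Hg) as [E [Ea Eb]].
   destruct Hg as [Hab _].
   destruct (H_jump_at (F a) ltac:(lra)) as [m Hmj].
   assert (Hxs : eqT (F x) (F a)).
   { destruct Hx as [[k Hk]|[k Hk]].
     - exists k. replace x with (a + IZR k) by lra. rewrite F_shiftZ. ring.
     - exists k. replace x with (b + IZR k) by lra. rewrite F_shiftZ, <- E. ring. }
   exists (zz m). destruct Hmj as [Hmj|Hmj].
   + left. apply (eqT_trans _ _ _ (eqT_sym _ _ Hy)). apply (eqT_trans _ _ _ Hxs).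
     apply (eqT_trans _ _ _ Hmj). apply eqT_eq. unfold p. ring.
   + right. apply (eqT_trans _ _ _ (eqT_sym _ _ Hy)). apply (eqT_trans _ _ _ Hxs).
     apply (eqT_trans _ _ _ Hmj). apply eqT_eq. unfold p. ring.
 - intros [n Hn]. destruct (zz_surj n) as [m Hmz].
   assert (Hgen : forall e, (eqT e (p m) \/ eqT e (p m + /2)) -> eqT y e ->
      exists x, accessible Cs x /\ eqT (F x) y).
   { intros e He Hye. pose proof (H_jump_pos e m He).
     exists (Hm e). split.
     - exists (Hm e), (H e). split. apply jump_gap; auto. left. apply eqT_eq; auto.
     - rewrite F_Hm. apply eqT_sym; auto. }
   destruct Hn as [Hn|Hn].
   + apply (Hgen (p m)). left. apply eqT_eq; auto.
     apply (eqT_trans _ _ _ Hn). apply eqT_eq. unfold p. rewrite Hmz. ring.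
   + apply (Hgen (p m + /2)). right. apply eqT_eq; auto.
     apply (eqT_trans _ _ _ Hn). apply eqT_eq. unfold p. rewrite Hmz. ring.
Qed.

Lemma C_sym x : Cs x <-> Cs (x + /2).
Proof. split.
 - intros [s [E|E]]; exists (s + /2); subst x; [left; rewrite H_half | right; rewrite Hm_half]; auto.
 - intros [s [E|E]]; exists (s - /2).
   + left. pose proof (H_half (s - /2)). replace (s - /2 + /2) with s in H0 by ring. lra.
   + right. pose proof (Hm_half (s - /2)). replace (s - /2 + /2) with s in H0 by ring. lra.
Qed.

End Construction.

Theorem lemma3p2 (tau phi : R) (Htau : irrational tau) :
  exists (C : R -> Prop) (F : R -> R),
    cantor_set C /\
    (forall x, C x <-> C (x + /2)) /\
    cantor_function C F /\
    (forall y, (exists x, accessible C x /\ eqT (F x) y) <->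
               (exists n : Z, eqT y (phi + IZR n * tau) \/
                              eqT y ((phi + /2) + IZR n * tau))) /\
    (forall x, eqT (F (x + /2)) (F x + /2)).
Proof.
 exists (Cs phi tau), (F phi tau). split.
 - split. apply C_closed. split. exists (H phi tau 0), 0. auto.
   split. apply C_td; auto. apply C_perfect.
 - split. apply C_sym. split. apply F_cf. split. apply acc_image; auto.
   intros x. apply eqT_eq. apply F_half.
Qed.
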